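(* Let $\alpha\in(0,1)$ and let $X_1,X_2,Y$ be real-valued random variables on a probability space $(\Omega,\mathcal A,\mathbb Q)$. If $\mathbb E_{\mathbb Q}\,\mathrm S^{\rm E}_{\alpha,\theta}(X_1,Y)\le\mathbb E_{\mathbb Q}\,\mathrm S^{\rm E}_{\alpha,\theta}(X_2,Y)$ for every $\theta\in\mathbb R$, then $X_1$ dominates $X_2$ as an $\alpha$-expectile forecast, i.e. $\mathbb E_{\mathbb Q}\,\mathrm S(X_1,Y)\le\mathbb E_{\mathbb Q}\,\mathrm S(X_2,Y)$ (expectations in $[0,\infty]$) for every $\mathrm S\in\mathcal S^{\rm E}_\alpha$.
   Context: $(t)_+=\max(t,0)$. For a convex $\phi:\mathbb R\to\mathbb R$, $\phi'$ denotes its left-hand derivative. $\mathcal S^{\rm E}_\alpha$ is the class of all scoring functions $\mathrm S(x,y)=|\mathbb 1(y<x)-\alpha|\,(\phi(y)-\phi(x)-\phi'(x)(y-x))$, $x,y\in\mathbb R$, with $\phi$ convex (these are nonnegative). The elementary expectile scoring function is $\mathrm S^{\rm E}_{\alpha,\theta}(x,y)=|\mathbb 1(y<x)-\alpha|\big((y-\theta)_+-(x-\theta)_+-(y-x)\mathbb 1(\theta<x)\big)$, i.e. it equals $(1-\alpha)|y-\theta|$ if $y\le\theta<x$, $\alpha|y-\theta|$ if $x\le\theta<y$, and $0$ otherwise. *)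

(* Defs.v *)
From HB Require Import structures.
From mathcomp Require Import all_boot all_order all_algebra.
From mathcomp Require Import all_classical all_reals all_analysis.
Set Implicit Arguments. Unset Strict Implicit. Unset Printing Implicit Defensive.
Import Order.TTheory GRing.Theory Num.Theory.
Import numFieldNormedType.Exports.
Local Open Scope classical_set_scope.
Local Open Scope ring_scope.

Definition convex_fun (R : realType) (phi : R -> R) : Prop :=
  forall (x y t : R), 0 <= t -> t <= 1 ->
    phi (t * x + (1 - t) * y) <= t * phi x + (1 - t) * phi y.

Definition left_deriv (R : realType) (phi : R -> R) (x : R) : R :=
  lim ((fun h : R => (phi x - phi (x - h)) / h) @ 0^'+).

Definition expectile_score (R : realType) (alpha : R) (phi : R -> R)
    (x y : R) : R :=
  `|(y < x)%R%:R - alpha| * (phi y - phi x - left_deriv phi x * (y - x)).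

Definition expectile_scores (R : realType) (alpha : R) : set (R -> R -> R) :=
  [set S | exists phi : R -> R, convex_fun phi /\ S = expectile_score alpha phi].

Definition elem_expectile_score (R : realType) (alpha theta : R) (x y : R) : R :=
  `|(y < x)%R%:R - alpha| *
    (Num.max (y - theta) 0 - Num.max (x - theta) 0 - (y - x) * (theta < x)%R%:R).

(* Main.v *)
Require Import Defs.
From HB Require Import structures.
From mathcomp Require Import all_boot all_order all_algebra.
From mathcomp Require Import all_classical all_reals all_analysis.
From mathcomp Require Import ring lra measurable_realfun.
Import Order.TTheory GRing.Theory Num.Theory.
Local Open Scope classical_set_scope.
Local Open Scope ring_scope.

Set Implicit Arguments. Unset Strict Implicit. Unset Printing Implicit Defensive.
Import numFieldNormedType.Exports.

Section convex.
Context {R : realType} (phi : R -> R) (cphi : convex_fun phi).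

Lemma cvx3 a b c : a < b -> b < c ->
  phi b * (c - a) <= (c - b) * phi a + (b - a) * phi c.
Proof.
move=> ab bc.
have ca : 0 < c - a by lra.
set t := (c - b) / (c - a).
have t0 : 0 <= t by rewrite /t divr_ge0 //; lra.
have t1 : t <= 1 by rewrite /t ler_pdivrMr //; lra.
have hb : t * a + (1 - t) * c = b.
  rewrite /t; field; lra.
have := cphi a c t0 t1; rewrite hb => H.
have := ler_wpM2r (ltW ca) H.
have -> : (t * phi a + (1 - t) * phi c) * (c - a)
        = (c - b) * phi a + (b - a) * phi c.
  rewrite /t; field; lra.
by [].
Qed.

Lemma cvxA a b c : a < b -> b < c ->
  (phi b - phi a) * (c - b) <= (phi c - phi b) * (b - a).
Proof. move=> ab bc; have := cvx3 ab bc; nra. Qed.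

Lemma cvxB a b c : a < b -> b < c ->
  (phi c - phi a) * (c - b) <= (phi c - phi b) * (c - a).
Proof. move=> ab bc; have := cvx3 ab bc; nra. Qed.

Lemma cvxC a b c : a < b -> b < c ->
  (phi b - phi a) * (c - a) <= (phi c - phi a) * (b - a).
Proof. move=> ab bc; have := cvx3 ab bc; nra. Qed.

End convex.

Section lderiv.
Context {R : realType} (phi : R -> R) (cphi : convex_fun phi).

Let sl x h := (phi x - phi (x - h)) / h.
Let E x := sl x @` `]0, +oo[.

Let sl_ub x y h : x < y -> 0 < h -> sl x h <= (phi y - phi x) / (y - x).
Proof.
move=> xy h0; rewrite /sl ler_pdivrMr // mulrAC ler_pdivlMr; last lra.
have H := cvxA cphi (a:=x - h) (b:=x) (c:=y) ltac:(lra) xy.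
rewrite (_ : x - (x - h) = h) in H; last lra.
nra.
Qed.

Let sl_ni x : {in `]0, +oo[ &, nonincreasing_fun (sl x)}.
Proof.
move=> h1 h2; rewrite !in_itv /= !andbT => h10 h20 h12.
rewrite /sl; case: (eqVneq h1 h2) => [->//|ne].
have lt12 : h1 < h2 by rewrite lt_neqAle ne h12.
rewrite ler_pdivrMr // mulrAC ler_pdivlMr //.
have H := cvxB cphi (a:=x - h2) (b:=x - h1) (c:=x) ltac:(lra) ltac:(lra).
rewrite (_ : x - (x - h1) = h1) in H; last lra.
rewrite (_ : x - (x - h2) = h2) in H; last lra.
nra.
Qed.

Let E_ub x : has_ubound (E x).
Proof.
exists ((phi (x+1) - phi x) / (x + 1 - x)) => _ [h] /= hin <-.
move: hin; rewrite in_itv /= andbT => h0.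
by apply: sl_ub => //; lra.
Qed.

Let E_sup x : has_sup (E x).
Proof. split; last exact: E_ub. by exists (sl x 1), 1 => //=; rewrite in_itv /= ltr01. Qed.

Lemma ld_sup x : left_deriv phi x = sup (E x).
Proof.
rewrite /left_deriv; apply: cvg_lim => //.
exact: (@nonincreasing_at_right_cvgr _ (sl x) 0 (BInfty _ false) erefl (sl_ni x) (E_ub x)).
Qed.

Lemma ldF1 x h : 0 < h -> phi x - phi (x - h) <= left_deriv phi x * h.
Proof.
move=> h0; rewrite -ler_pdivrMr // ld_sup; apply: sup_upper_bound (E_sup x) _ _.
by exists h => //=; rewrite in_itv /= h0.
Qed.

Lemma ldF2 x e : 0 < e -> exists2 h, 0 < h & (left_deriv phi x - e) * h <= phi x - phi (x - h).
Proof.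
move=> e0; have [_ [h /= hin <-] H] := sup_adherent e0 (E_sup x).
move: hin; rewrite in_itv /= andbT => h0.
exists h => //; rewrite -ler_pdivlMr // ld_sup; exact: ltW.
Qed.

Lemma ldF3 x y : x < y -> left_deriv phi x * (y - x) <= phi y - phi x.
Proof.
move=> xy; rewrite -ler_pdivlMr; last lra.
rewrite ld_sup; apply: ge_sup; first by exists (sl x 1), 1 => //=; rewrite in_itv /= ltr01.
move=> _ [h /= hin <-]; move: hin; rewrite in_itv /= andbT => h0.
exact: sl_ub.
Qed.

Lemma ld_nd x y : x <= y -> left_deriv phi x <= left_deriv phi y.
Proof.
rewrite le_eqVlt => /orP[/eqP->//|xy].
have h1 := ldF3 xy; have := ldF1 y (h:=y - x); rewrite subKr.
move=> /(_ ltac:(lra)) h2.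
have : left_deriv phi x * (y - x) <= left_deriv phi y * (y - x) by lra.
by rewrite ler_pM2r //; lra.
Qed.

Lemma ld_lc x e : 0 < e -> exists2 u, u < x & left_deriv phi x - e <= left_deriv phi u.
Proof.
move=> e0; have [h h0 Hh] := ldF2 x (e := e / 2) ltac:(lra).
exists (x - h / 2); first lra.
have A1 := ldF1 (x - h/2) (h := h/2) ltac:(lra).
have A2 := ldF1 x (h := h/2) ltac:(lra).
rewrite (_ : x - h / 2 - h / 2 = x - h) in A1; last lra.
have : (left_deriv phi x - e) * (h/2) <= left_deriv phi (x - h / 2) * (h / 2) by nra.
by rewrite ler_pM2r //; lra.
Qed.

End lderiv.

Section cumul.
Context {R : realType} (phi : R -> R) (cphi : convex_fun phi).

Definition gfun (t : R) := - left_deriv phi (- t).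

Lemma gfun_nd : nondecreasing gfun.
Proof. move=> s t st; rewrite /gfun lerN2; apply: (ld_nd cphi); rewrite lerN2; exact: st. Qed.

Lemma gfun_rc : right_continuous gfun.
Proof.
move=> t; apply/cvgrPdist_le => e e0.
have [u ut He] := ld_lc cphi (- t) e0.
near=> r.
have tr : t < r by near: r; exact: nbhs_right_gt.
have ru : r <= - u by near: r; apply: nbhs_right_le; lra.
have h1 : left_deriv phi u <= left_deriv phi (- r) by apply: (ld_nd cphi); lra.
have h2 : left_deriv phi (- r) <= left_deriv phi (- t) by apply: (ld_nd cphi); lra.
rewrite /gfun ler_norml; apply/andP; split; lra.
Unshelve. all: by end_near. Qed.

Definition gcum : cumulative R R :=
  HB.pack gfun (@isCumulative.Build R _ R gfun gfun_nd gfun_rc).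

Definition lsm := lebesgue_stieltjes_measure gcum.

Lemma lsm_itv a b : a <= b ->
  lsm `]a, b]%classic = ((left_deriv phi (- a)) - (left_deriv phi (- b)))%:E.
Proof.
move=> ab.
rewrite /lsm /lebesgue_stieltjes_measure /measure_extension.
rewrite measurable_mu_extE; last exact: is_ocitv.
apply: (etrans (wlength_itv gcum `]a, b]%R)) => /=.
case: ifPn => [_|]; first by rewrite -EFinD /gfun /=; congr (_%:E); lra.
rewrite lte_fin -leNgt => ba.
have -> : a = b by apply/eqP; rewrite eq_le ab ba.
by rewrite subrr.
Qed.

End cumul.

Section pointwise.
Context {R : realType}.

Definition sc (th x y : R) := Num.max (y - th) 0 - Num.max (x - th) 0 - (y - x) * (th < x)%R%:R.
Definition ind (p q t : R) : R := ((p < t)%R && (t <= q)%R)%:R.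

Ltac solve_sc := rewrite /sc /ind ?maxEle;
  repeat match goal with
  | |- context [ if (?a <= 0)%R then _ else _ ] => case: (leP a 0) => ?
  | |- context [ nat_of_bool ((@Order.lt _ _ ?a ?b) && (@Order.le _ _ ?c ?d)) ] => case: (ltP a b) => ?; case: (leP c d) => ?
  | |- context [ nat_of_bool (@Order.lt _ _ ?a ?b) ] => case: (ltP a b) => ?
  end; rewrite /= ?mulr0 ?mulr1; lra.

Lemma sc_ge0 t x y : 0 <= sc (- t) x y.
Proof. rewrite /sc /ind ?maxEle;
  repeat match goal with
  | |- context [ if (?a <= 0)%R then _ else _ ] => case: (leP a 0) => ?
  | |- context [ nat_of_bool ((@Order.lt _ _ ?a ?b) && (@Order.le _ _ ?c ?d)) ] => case: (ltP a b) => ?; case: (leP c d) => ?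
  | |- context [ nat_of_bool (@Order.lt _ _ ?a ?b) ] => case: (ltP a b) => ?
  end; rewrite /= ?mulr0 ?mulr1; lra. Qed.

Lemma sc_le x y t : x <= y -> sc (- t) x y <= (y - x) * ind (- y) (- x) t.
Proof. move=> ?; solve_sc. Qed.

Lemma sc_split x m y t : x < m -> m < y ->
  sc (- t) x y = sc (- t) x m + sc (- t) m y + (y - m) * ind (- m) (- x) t.
Proof. move=> ? ?; solve_sc. Qed.

Lemma sc_swap x y t : y < x ->
  sc (- t) x y + sc (- t) y x = (x - y) * ind (- x) (- y) t.
Proof. move=> ?; solve_sc. Qed.

Lemma sc_eq x t : sc (- t) x x = 0.
Proof. rewrite /sc /ind ?maxEle;
  repeat match goal with
  | |- context [ if (?a <= 0)%R then _ else _ ] => case: (leP a 0) => ?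
  | |- context [ nat_of_bool ((@Order.lt _ _ ?a ?b) && (@Order.le _ _ ?c ?d)) ] => case: (ltP a b) => ?; case: (leP c d) => ?
  | |- context [ nat_of_bool (@Order.lt _ _ ?a ?b) ] => case: (ltP a b) => ?
  end; rewrite /= ?mulr0 ?mulr1; lra. Qed.

End pointwise.

Lemma measurable_sc {R : realType} d (T : measurableType d) (f g h : T -> R) :
  measurable_fun setT f -> measurable_fun setT g -> measurable_fun setT h ->
  measurable_fun setT (fun z => sc (f z) (g z) (h z)).
Proof.
move=> mf mg mh; rewrite /sc.
have mind : measurable_fun setT (fun z => ((f z < g z)%R)%:R : R).
  rewrite (_ : (fun z => _) = fun z => if (f z < g z)%R then 1 else 0); last first.
    by apply/funext => z; case: ltP.
  apply: measurable_fun_ifT => //; exact: measurable_fun_ltr.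
apply: measurable_funB; first apply: measurable_funB.
- by apply: measurable_maxr => //; exact: measurable_funB.
- by apply: measurable_maxr => //; exact: measurable_funB.
- by apply: measurable_funM => //; exact: measurable_funB.
Qed.

Section rep.
Context {R : realType} (phi : R -> R) (cphi : convex_fun phi).
Local Notation mu := (lsm cphi).
Local Notation D := (left_deriv phi).

Lemma msc x y : measurable_fun setT (fun t : measurableTypeR R => (sc (- t) x y)%:E).
Proof.
apply/measurable_EFinP. have := @measurable_sc R _ (measurableTypeR R) (fun t => - t) (cst x) (cst y). move=> H. apply: H.
- exact: measurable_funN.
- exact: measurable_cst.
- exact: measurable_cst.
Qed.

Lemma ind_indic p q (t : R) : ind p q t = \1_(`]p, q]%classic) t.
Proof.
rewrite indicE /ind (_ : (t \in _) = (p < t <= q)%R) //.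
apply/idP/idP => [/set_mem|H]; [|apply: mem_set]; rewrite /= in_itv //.
Qed.

Lemma mind p q : measurable_fun setT (fun t : measurableTypeR R => (ind p q t)%:E).
Proof.
apply/measurable_EFinP.
rewrite (_ : ind p q = \1_(`]p, q]%classic)); last first.
  by apply/funext => t; rewrite ind_indic.
apply: measurable_indic; exact: measurable_itv.
Qed.

Lemma I_ind c p q : 0 <= c -> p <= q ->
  (\int[mu]_t ((c * ind p q t)%R)%:E = (c * (D (- p) - D (- q)))%:E)%E.
Proof.
move=> c0 pq.
under eq_integral do rewrite EFinM.
rewrite ge0_integralZl_EFin //; last 2 first.
- by move=> t _; rewrite lee_fin /ind; case: (_ && _).
- exact: mind.
rewrite (_ : (fun t => _) = (fun t => (\1_(`]p, q]%classic) t)%:E)); last first.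
  by apply/funext => t; rewrite ind_indic.
rewrite integral_indic // setIT.
transitivity (c%:E * lsm cphi `]p, q]%classic)%E; first by [].
by rewrite lsm_itv // -EFinM.
Qed.

Lemma mscr x y : measurable_fun setT (fun t : measurableTypeR R => sc (- t) x y).
Proof. by apply/measurable_EFinP; exact: msc. Qed.

Definition Iv x y := (\int[mu]_t (sc (- t)%R x y)%:E)%E.
Definition Tv x y := phi y - phi x - D x * (y - x).

Lemma Iv_ge0 x y : (0 <= Iv x y)%E.
Proof. by apply: integral_ge0 => t _; rewrite lee_fin sc_ge0. Qed.

Lemma Iv_le x y : x <= y -> (Iv x y <= ((y - x) * (D y - D x))%:E)%E.
Proof.
move=> xy.
apply: (@le_trans _ _ (\int[mu]_t (((y - x) * ind (- y) (- x) t)%R)%:E)%E).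
  apply: ge0_le_integral => //.
  - by move=> t _; rewrite lee_fin sc_ge0.
  - exact: msc.
  - apply/measurable_EFinP; apply: measurable_funM; first exact: measurable_cst.
    by apply/measurable_EFinP; exact: mind.
  - by move=> t _; rewrite lee_fin sc_le.
by rewrite I_ind ?opprK //; [lra|rewrite lerN2].
Qed.

Lemma Iv_eq x : Iv x x = 0%E.
Proof.
rewrite /Iv (eq_integral (fun _ => 0%E)); first exact: integral0.
by move=> t _; rewrite sc_eq.
Qed.

Lemma Iv_sum (f g : R -> R) : measurable_fun setT f -> measurable_fun setT g ->
  (forall t, 0 <= f t) -> (forall t, 0 <= g t) ->
  (\int[mu]_t ((f t + g t)%R)%:E = \int[mu]_t (f t)%:E + \int[mu]_t (g t)%:E)%E.
Proof.
move=> mf mg f0 g0.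
under eq_integral do rewrite EFinD.
apply: ge0_integralD => //.
- by move=> t _; rewrite lee_fin.
- exact/measurable_EFinP.
- by move=> t _; rewrite lee_fin.
- exact/measurable_EFinP.
Qed.

Lemma Iv_split x m y : x < m -> m < y ->
  Iv x y = (Iv x m + Iv m y + ((y - m) * (D m - D x))%:E)%E.
Proof.
move=> xm my; rewrite /Iv.
under eq_integral => t _ do rewrite (sc_split t xm my).
rewrite Iv_sum //; last 4 first.
- apply: measurable_funD; exact: mscr.
- apply: measurable_funM; first exact: measurable_cst.
  by apply/measurable_EFinP; exact: mind.
- by move=> t; apply: addr_ge0; exact: sc_ge0.
- by move=> t; apply: mulr_ge0; [lra|rewrite /ind; case: (_ && _)].
rewrite Iv_sum //; last 4 first.
- exact: mscr.
- exact: mscr.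
- by move=> t; exact: sc_ge0.
- by move=> t; exact: sc_ge0.
by rewrite I_ind ?opprK //; [lra|rewrite lerN2; lra].
Qed.

Lemma Iv_swap x y : y < x ->
  (Iv x y + Iv y x = ((x - y) * (D x - D y))%:E)%E.
Proof.
move=> yx; rewrite /Iv -Iv_sum //; last 4 first.
- exact: mscr.
- exact: mscr.
- by move=> t; exact: sc_ge0.
- by move=> t; exact: sc_ge0.
under eq_integral => t _ do rewrite (sc_swap t yx).
by rewrite I_ind ?opprK //; [lra|rewrite lerN2; lra].
Qed.

End rep.

Section rep2.
Context {R : realType} (phi : R -> R) (cphi : convex_fun phi).
Local Notation D := (left_deriv phi).
Local Notation Iv := (Iv cphi).
Local Notation Tv := (Tv phi).

Lemma Tv_ge0 x y : x <= y -> 0 <= Tv x y.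
Proof.
rewrite le_eqVlt => /orP[/eqP->|xy]; first by rewrite /Tv; lra.
by have := ldF3 cphi xy; rewrite /Tv; lra.
Qed.

Lemma Tv_le x y : x <= y -> Tv x y <= (y - x) * (D y - D x).
Proof.
rewrite le_eqVlt => /orP[/eqP->|xy]; first by rewrite /Tv; lra.
have := ldF1 cphi y (h := y - x); rewrite subKr => /(_ ltac:(lra)).
by rewrite /Tv; nra.
Qed.

Lemma Iv_fin x y : x <= y -> Iv x y = (fine (Iv x y))%:E.
Proof.
move=> xy; rewrite fineK // ge0_fin_numE ?Iv_ge0 //.
exact: (le_lt_trans (Iv_le cphi xy) (ltry _)).
Qed.

Definition Ev x y := fine (Iv x y) - Tv x y.

Lemma Ev_bound x y : x <= y -> `|Ev x y| <= (y - x) * (D y - D x).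
Proof.
move=> xy; have h1 := Iv_le cphi xy; have h0 := Iv_ge0 cphi x y.
rewrite (Iv_fin xy) lee_fin in h1; rewrite (Iv_fin xy) lee_fin in h0.
have := Tv_ge0 xy; have := Tv_le xy.
rewrite /Ev ler_norml; move=> *; apply/andP; split; lra.
Qed.

Lemma Ev_split x m y : x < m -> m < y -> Ev x y = Ev x m + Ev m y.
Proof.
move=> xm my; rewrite /Ev.
have := Iv_split cphi xm my.
rewrite (Iv_fin (ltW xm)) (Iv_fin (ltW my)) -!EFinD => ->.
rewrite /= /Tv; ring.
Qed.

Lemma Ev_eq x : Ev x x = 0.
Proof. by rewrite /Ev Iv_eq /= /Tv; ring. Qed.

Lemma Ev_n n : forall x h, 0 < h ->
  `|Ev x (x + n%:R * h)| <= h * (D (x + n%:R * h) - D x).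
Proof.
elim: n => [|n IH] x h h0.
  by rewrite mul0r addr0 Ev_eq normr0 subrr mulr0.
case: n IH => [|n] IH.
  rewrite mul1r; have := Ev_bound (x := x) (y := x + h) ltac:(lra).
  by rewrite (_ : x + h - x = h) //; ring.
set m := x + n.+1%:R * h.
have -> : x + n.+2%:R * h = m + h by rewrite /m -addn1 natrD; ring.
have hn1 : 0 < n.+1%:R :> R by rewrite ltr0n.
have hm : x < m by rewrite /m; nra.
rewrite (Ev_split hm) ?ltrDl //.
have := IH x h h0; rewrite -/m => H1.
have := Ev_bound (x := m) (y := m + h) ltac:(lra).
rewrite (_ : m + h - m = h); last ring.
move=> H2.
rewrite (le_trans (ler_normD _ _)) //.
have -> : h * (D (m + h) - D x) = h * (D m - D x) + h * (D (m + h) - D m) by ring.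
exact: lerD.
Qed.

Lemma Ev0 x y : x < y -> Ev x y = 0.
Proof.
move=> xy; set c := (y - x) * (D y - D x).
have c0 : 0 <= c by rewrite /c mulr_ge0 // ?subr_ge0; [exact: ltW | apply: ld_nd cphi _ _ (ltW xy)].
have key : forall n : nat, (0 < n)%N -> `|Ev x y| * n%:R <= c.
  move=> n n0.
  have n0' : 0 < n%:R :> R by rewrite ltr0n.
  have := Ev_n n x (h := (y - x) / n%:R) ltac:(apply: divr_gt0; lra).
  rewrite (_ : x + n%:R * ((y - x) / n%:R) = y); last by field; lra.
  rewrite -ler_pdivlMr // => H; apply: (le_trans H).
  by rewrite /c mulrAC.
apply/eqP; rewrite -normr_eq0; apply/negPn/negP => ne.
have E0 : 0 < `|Ev x y| by rewrite lt_neqAle eq_sym ne normr_ge0.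
set n := Num.bound (c / `|Ev x y|).
have := archi_boundP (divr_ge0 c0 (ltW E0)); rewrite -/n => hn.
have n0 : (0 < n)%N by rewrite -(ltr0n R); apply: le_lt_trans hn; exact: divr_ge0 c0 (ltW E0).
have H := key n n0.
have H' : n%:R <= c / `|Ev x y| by rewrite ler_pdivlMr // mulrC.
by have := lt_le_trans hn H'; rewrite ltxx.
Qed.

Lemma rep_lt x y : x < y -> Iv x y = (Tv x y)%:E.
Proof.
move=> xy; rewrite (Iv_fin (ltW xy)); congr (_%:E).
by have := Ev0 xy; rewrite /Ev; lra.
Qed.

Lemma rep x y : Iv x y = (Tv x y)%:E.
Proof.
have [xy|yx|<-] := ltgtP x y.
- exact: rep_lt.
- have := Iv_swap cphi yx; rewrite (rep_lt yx).
  move: (Iv_ge0 cphi x y); case: (Iv x y) => [r| |] //= _.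
  rewrite -EFinD => H0; have H := EFin_inj H0; congr (_%:E).
  by rewrite /Tv in H *; nra.
- by rewrite Iv_eq /Tv; congr (_%:E); ring.
Qed.

End rep2.

Lemma keyK d (Omega : measurableType d) (R : realType) (Q : probability Omega R)
  (alpha : R) (phi : R -> R) (cphi : convex_fun phi) (X Y : Omega -> R) :
  measurable_fun setT X -> measurable_fun setT Y ->
  (\int[Q]_w (expectile_score alpha phi (X w) (Y w))%:E =
   \int[lsm cphi]_t \int[Q]_w (elem_expectile_score alpha (- t)%R (X w) (Y w))%:E)%E.
Proof.
move=> mX mY.
pose W := fun w => `|((Y w < X w)%R)%:R - alpha|.
have mW : measurable_fun setT W.
  apply: measurableT_comp; first exact: normr_measurable.
  apply: measurable_funB; last exact: measurable_cst.
  rewrite (_ : (fun w => _) = fun w => if (Y w < X w)%R then 1 else 0); last first.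
    by apply/funext => w; case: ltP.
  apply: measurable_fun_ifT => //; exact: measurable_fun_ltr.
pose f := fun z : Omega * measurableTypeR R => (W z.1 * sc (- z.2) (X z.1) (Y z.1))%:E.
have mf : measurable_fun setT f.
  apply/measurable_EFinP; apply: measurable_funM.
    exact: measurableT_comp mW measurable_fst.
  apply: (@measurable_sc R _ _ (fun z : Omega * measurableTypeR R => - z.2)
           (fun z => X z.1) (fun z => Y z.1)).
  - by apply: measurable_funN; exact: measurable_snd.
  - exact: measurableT_comp mX measurable_fst.
  - exact: measurableT_comp mY measurable_fst.
have f0 : forall z, (0 <= f z)%E.
  by move=> z; rewrite lee_fin; apply: mulr_ge0; [exact: normr_ge0 | exact: sc_ge0].
transitivity (\int[Q]_w \int[lsm cphi]_t f (w, t))%E.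
  apply: eq_integral => w _; rewrite /f /=.
  transitivity ((W w)%:E * Iv cphi (X w) (Y w))%E.
    by rewrite (rep cphi) -EFinM.
  rewrite /Iv -ge0_integralZl_EFin //.
  - by move=> t Ht; rewrite lee_fin sc_ge0.
  - exact: msc.
  - exact: normr_ge0.
rewrite (fubini_tonelli f) //.
Qed.

Lemma keyM d (Omega : measurableType d) (R : realType) (Q : probability Omega R)
  (alpha : R) (phi : R -> R) (cphi : convex_fun phi) (X Y : Omega -> R) :
  measurable_fun setT X -> measurable_fun setT Y ->
  measurable_fun setT (fun t : measurableTypeR R =>
    \int[Q]_w (elem_expectile_score alpha (- t)%R (X w) (Y w))%:E)%E.
Proof.
move=> mX mY.
pose W := fun w => `|((Y w < X w)%R)%:R - alpha|.
have mW : measurable_fun setT W.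
  apply: measurableT_comp; first exact: normr_measurable.
  apply: measurable_funB; last exact: measurable_cst.
  rewrite (_ : (fun w => _) = fun w => if (Y w < X w)%R then 1 else 0); last first.
    by apply/funext => w; case: ltP.
  apply: measurable_fun_ifT => //; exact: measurable_fun_ltr.
pose f := fun z : Omega * measurableTypeR R => (W z.1 * sc (- z.2) (X z.1) (Y z.1))%:E.
have mf : measurable_fun setT f.
  apply/measurable_EFinP; apply: measurable_funM.
    exact: measurableT_comp mW measurable_fst.
  apply: (@measurable_sc R _ _ (fun z : Omega * measurableTypeR R => - z.2)
           (fun z => X z.1) (fun z => Y z.1)).
  - by apply: measurable_funN; exact: measurable_snd.
  - exact: measurableT_comp mX measurable_fst.
  - exact: measurableT_comp mY measurable_fst.
have f0 : forall z, (0 <= f z)%E.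
  by move=> z; rewrite lee_fin; apply: mulr_ge0; [exact: normr_ge0 | exact: sc_ge0].
exact: (measurable_fun_fubini_tonelli_G f mf f0).
Qed.

Lemma keyG d (Omega : measurableType d) (R : realType) (Q : probability Omega R)
  (alpha : R) (X Y : Omega -> R) (t : R) :
  (0 <= \int[Q]_w (elem_expectile_score alpha (- t)%R (X w) (Y w))%:E)%E.
Proof.
apply: integral_ge0 => w Hw; rewrite lee_fin /elem_expectile_score.
apply: mulr_ge0; [exact: normr_ge0 | exact: sc_ge0].
Qed.

Unset Implicit Arguments.
Local Open Scope ereal_scope.

Theorem mainTheorem7 (d : measure_display) (Omega : measurableType d)
  (R : realType) (Q : probability Omega R) (alpha : R)
  (X1 X2 Y : Omega -> R) :
  (0 < alpha < 1)%R ->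
  measurable_fun setT X1 -> measurable_fun setT X2 -> measurable_fun setT Y ->
  (forall theta : R,
     \int[Q]_w (elem_expectile_score alpha theta (X1 w) (Y w))%:E
     <= \int[Q]_w (elem_expectile_score alpha theta (X2 w) (Y w))%:E) ->
  forall S : R -> R -> R, expectile_scores alpha S ->
     \int[Q]_w (S (X1 w) (Y w))%:E <= \int[Q]_w (S (X2 w) (Y w))%:E.
Proof.
move=> _ mX1 mX2 mY H S [phi [cphi ->]].
rewrite (keyK Q alpha cphi mX1 mY) (keyK Q alpha cphi mX2 mY).
apply: ge0_le_integral => //.
- move=> t Ht; exact: keyG.
- exact: (keyM Q alpha cphi mX1 mY).
- exact: (keyM Q alpha cphi mX2 mY).
Qed.
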